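(* Let $\mathcal{X}=\{A\in\mathcal{M}_d: A=A^\dagger,\ \operatorname{tr}A=0\}$ as a real vector space, let $\mathcal{V}=\{A\mapsto UAU^\dagger: U\in\mathcal{M}_d\text{ unitary}\}$ regarded as real-linear maps on $\mathcal{X}$, and let $\mathrm{zerospan}_{\mathbb{R}}\mathcal{V}=\{\sum_i\lambda_iV_i:\ V_i\in\mathcal{V},\ \lambda_i\in\mathbb{R},\ \sum_i\lambda_i=0\}$ (finite sums). Then $\mathrm{zerospan}_{\mathbb{R}}\mathcal{V}=\mathcal{B}(\mathcal{X})$, the space of all real-linear maps $\mathcal{X}\to\mathcal{X}$. *)

(* Defs.v *)
From HB Require Import structures.
From mathcomp Require Import all_boot all_order all_algebra.
From mathcomp Require Import complex.
From mathcomp Require Import reals.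
Set Implicit Arguments. Unset Strict Implicit. Unset Printing Implicit Defensive.
Import Order.TTheory GRing.Theory Num.Theory.
Local Open Scope ring_scope.
Local Open Scope complex_scope.

Definition adjmx (R : realType) (d : nat) (A : 'M[R[i]]_d) : 'M[R[i]]_d :=
  (map_mx (@conjc R) A)^T.

Definition inX (R : realType) (d : nat) (A : 'M[R[i]]_d) : bool :=
  (A == adjmx A) && (\tr A == 0).

Definition unitary (R : realType) (d : nat) (U : 'M[R[i]]_d) : bool :=
  U *m adjmx U == 1%:M.

(* f is (the representative of) a real-linear map X -> X *)
Definition real_linear_on_X (R : realType) (d : nat) (f : 'M[R[i]]_d -> 'M[R[i]]_d) : Prop :=
  (forall A, inX A -> inX (f A)) /\
  (forall (a : R) A B, inX A -> inX B -> f (a%:C *: A + B) = a%:C *: f A + f B).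

Definition in_zerospan_V (R : realType) (d : nat) (f : 'M[R[i]]_d -> 'M[R[i]]_d) : Prop :=
  exists s : seq (R * 'M[R[i]]_d),
    all (fun p => unitary p.2) s /\
    \sum_(p <- s) p.1 = 0 /\
    forall A, inX A -> f A = \sum_(p <- s) p.1%:C *: (p.2 *m A *m adjmx p.2).

(* Main.v *)
Require Import Defs.
From HB Require Import structures.
From mathcomp Require Import all_boot all_order all_algebra perm.
From mathcomp Require Import complex reals.
From mathcomp Require Import ring lra.
Set Implicit Arguments. Unset Strict Implicit. Unset Printing Implicit Defensive.
Import Order.TTheory GRing.Theory Num.Theory.
Local Open Scope ring_scope.
Local Open Scope complex_scope.

Section Infra.
Variables (R : realType) (d : nat).
Local Notation C := (R[i]).
Local Notation M := ('M[R[i]]_d).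
Local Notation iC := (@Complex R 0 1).

Lemma conjR (a : R) : conjc (a%:C) = a%:C :> C.
Proof. by apply/eqP; rewrite eq_complex /= oppr0 !eqxx. Qed.

Lemma conjRM (a : R) (z : C) : conjc (a%:C * z) = a%:C * conjc z.
Proof. by case: z => x y; apply/eqP; rewrite eq_complex /= !mul0r !subr0 !addr0 mulrN !eqxx. Qed.

Lemma adjmxE (A : M) i j : adjmx A i j = conjc (A j i).
Proof. by rewrite /adjmx !mxE. Qed.

Lemma adjmxM (A B : M) : adjmx (A *m B) = adjmx B *m adjmx A.
Proof. by rewrite /adjmx map_mxM trmx_mul. Qed.

Lemma adjmxK (A : M) : adjmx (adjmx A) = A.
Proof. by apply/matrixP=> i j; rewrite /adjmx !mxE conjcK. Qed.

Lemma adjmx1 : adjmx (1%:M : M) = 1%:M.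
Proof. by apply/matrixP=> i j; rewrite /adjmx !mxE rmorphMn rmorph1 eq_sym. Qed.

Lemma adjmxD (A B : M) : adjmx (A + B) = adjmx A + adjmx B.
Proof. by apply/matrixP=> i j; rewrite /adjmx !mxE rmorphD. Qed.

Lemma adjmxZr (a : R) (A : M) : adjmx (a%:C *: A) = a%:C *: adjmx A.
Proof. by apply/matrixP=> i j; rewrite /adjmx !mxE conjRM. Qed.

Lemma unitaryE (U : M) : unitary U -> U *m adjmx U = 1%:M /\ adjmx U *m U = 1%:M.
Proof. move=> /eqP h; split=> //; exact: mulmx1C. Qed.

Lemma unitary_adj (U : M) : unitary U -> unitary (adjmx U).
Proof. by move=> /unitaryE [_ h]; rewrite /unitary adjmxK h. Qed.

Lemma unitaryM (U V : M) : unitary U -> unitary V -> unitary (U *m V).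
Proof.
move=> /unitaryE[h1 _] /unitaryE[h2 _]; apply/eqP.
by rewrite adjmxM mulmxA -(mulmxA U) h2 mulmx1 h1.
Qed.

Lemma unitary1 : unitary (1%:M : M).
Proof. by rewrite /unitary adjmx1 mulmx1. Qed.

Lemma inX_ad (U A : M) : unitary U -> inX A -> inX (U *m A *m adjmx U).
Proof.
move=> /unitaryE[h1 h2] /andP[/eqP hA /eqP tA]; apply/andP; split.
  by rewrite !adjmxM adjmxK -hA mulmxA.
by rewrite mxtrace_mulC mulmxA h2 mul1mx tA.
Qed.

Definition Lmap (s : seq (R * M)) (A : M) : M :=
  \sum_(p <- s) p.1%:C *: (p.2 *m A *m adjmx p.2).

Definition inSc (g : M -> M) (c : R) : Prop :=
  exists s : seq (R * M), all (fun p => unitary p.2) s /\ \sum_(p <- s) p.1 = c /\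
    forall A, inX A -> g A = Lmap s A.

Lemma inSc_zero g : inSc g 0 <-> in_zerospan_V g.
Proof. by []. Qed.

Lemma inSc_add g h c e : inSc g c -> inSc h e -> inSc (fun A => g A + h A) (c + e).
Proof.
move=> [s [us [ss hs]]] [t [ut [st ht]]]; exists (s ++ t); split; first by rewrite all_cat us ut.
split; first by rewrite big_cat ss st.
by move=> A hA; rewrite hs // ht // /Lmap big_cat.
Qed.

Lemma inSc_scale a g c : inSc g c -> inSc (fun A => a%:C *: g A) (a * c).
Proof.
move=> [s [us [ss hs]]]; exists [seq (a * p.1, p.2) | p <- s]; split.
  by rewrite all_map; apply: sub_all us => p.
split; first by rewrite big_map -ss mulr_sumr.
move=> A hA; rewrite hs // /Lmap big_map scaler_sumr; apply: eq_bigr => p _.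
by rewrite scalerA rmorphM.
Qed.

Lemma inSc_ext g h c : (forall A, inX A -> g A = h A) -> inSc g c -> inSc h c.
Proof.
move=> e [s [us [ss hs]]]; exists s; split=> //; split=> // A hA; by rewrite -e // hs.
Qed.

Lemma inSc_adl W g c : unitary W -> inSc g c -> inSc (fun A => W *m g A *m adjmx W) c.
Proof.
move=> uW [s [us [ss hs]]]; exists [seq (p.1, W *m p.2) | p <- s]; split.
  by rewrite all_map; apply: sub_all us => p /= up; apply: unitaryM.
split; first by rewrite big_map.
move=> A hA; rewrite hs // /Lmap big_map mulmx_sumr mulmx_suml; apply: eq_bigr => p _.
by rewrite /= -scalemxAr -scalemxAl adjmxM !mulmxA.
Qed.

Lemma inSc_adr W g c : unitary W -> inSc g c -> inSc (fun A => g (adjmx W *m A *m W)) c.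
Proof.
move=> uW [s [us [ss hs]]]; exists [seq (p.1, p.2 *m adjmx W) | p <- s]; split.
  by rewrite all_map; apply: sub_all us => p /= up; apply: unitaryM => //; apply: unitary_adj.
split; first by rewrite big_map.
move=> A hA; rewrite hs; last first.
  by have := inX_ad (unitary_adj uW) hA; rewrite adjmxK.
rewrite /Lmap big_map; apply: eq_bigr => p _.
by rewrite /= adjmxM adjmxK !mulmxA.
Qed.

Lemma inSc_ad U : unitary U -> inSc (fun A => U *m A *m adjmx U) 1.
Proof.
move=> uU; exists [:: (1, U)]; split; first by rewrite /= uU.
split; first by rewrite big_seq1.
by move=> A _; rewrite /Lmap big_seq1 /= scale1r.
Qed.

Lemma inSc_id : inSc id 1.
Proof.
apply: inSc_ext (inSc_ad unitary1) => A _; by rewrite adjmx1 mulmx1 mul1mx.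
Qed.

End Infra.

Section Mats.
Variables (R : realType) (d : nat).
Local Notation C := (R[i]).
Local Notation M := ('M[R[i]]_d).
Local Notation iC := (@Complex R 0 1).

Lemma sum_pick (F : 'I_d -> C) y : (forall k, k != y -> F k = 0) -> \sum_k F k = F y.
Proof. by move=> h; rewrite (bigD1 y) //= big1 ?addr0. Qed.

Lemma mul3_delta (U V : M) x y a b : (U *m delta_mx x y *m V) a b = U a x * V y b.
Proof.
rewrite mxE (sum_pick (y := y)).
  rewrite mxE (sum_pick (y := x)); first by rewrite mxE !eqxx mulr1.
  by move=> l hl; rewrite mxE (negbTE hl) mulr0.
move=> k hk; rewrite mxE big1 ?mul0r // => l _; by rewrite mxE (negbTE hk) andbF mulr0.
Qed.

Lemma ad_delta (U : M) x y a b : (U *m delta_mx x y *m adjmx U) a b = U a x * conjc (U b y).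
Proof. by rewrite mul3_delta /adjmx !mxE. Qed.

Lemma trM_delta x y (A : M) : \tr (delta_mx x y *m A) = A y x.
Proof.
rewrite /mxtrace (sum_pick (y := x)).
  rewrite mxE (sum_pick (y := y)); first by rewrite mxE !eqxx mul1r.
  by move=> k hk; rewrite mxE (negbTE hk) andbF mul0r.
move=> k hk; rewrite mxE big1 // => l _; by rewrite mxE (negbTE hk) mul0r.
Qed.

Lemma tr_delta x y : \tr (delta_mx x y : M) = (y == x)%:R.
Proof. by rewrite -[delta_mx x y]mulmx1 trM_delta mxE. Qed.

Definition Hm x y : M := delta_mx x y + delta_mx y x.
Definition Km x y : M := iC *: (delta_mx x y - delta_mx y x).
Definition Dd x y : M := delta_mx x x - delta_mx y y.
Definition Hp x y : M := Hm x y - ((x == y)%:R * 2 / d%:R)%:C *: 1%:M.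

Lemma HmC x y : Hm x y = Hm y x.
Proof. by rewrite /Hm addrC. Qed.

Lemma trH x y (A : M) : \tr (Hm x y *m A) = A y x + A x y.
Proof. by rewrite mulmxDl mxtraceD !trM_delta. Qed.

Lemma trK x y (A : M) : \tr (Km x y *m A) = iC * (A y x - A x y).
Proof. by rewrite -scalemxAl mxtraceZ mulmxBl linearB /= !trM_delta. Qed.

Lemma adjmx_delta x y : adjmx (delta_mx x y : M) = delta_mx y x.
Proof. by apply/matrixP=> a b; rewrite /adjmx !mxE rmorph_nat andbC. Qed.

Lemma adjmxZ (c : C) (A : M) : adjmx (c *: A) = conjc c *: adjmx A.
Proof. by apply/matrixP=> a b; rewrite /adjmx !mxE rmorphM. Qed.

Lemma adjmxN (A : M) : adjmx (- A) = - adjmx A.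
Proof. by apply/matrixP=> a b; rewrite /adjmx !mxE rmorphN. Qed.

Lemma conj_i : conjc iC = - iC.
Proof. by apply/eqP; rewrite eq_complex /= oppr0 !eqxx. Qed.

Lemma inX0 : inX (0 : M).
Proof. apply/andP; split; last by rewrite linear0.
by apply/eqP/matrixP=> a b; rewrite /adjmx !mxE rmorph0. Qed.

Lemma inX_lin (a : R) (A B : M) : inX A -> inX B -> inX (a%:C *: A + B).
Proof.
move=> /andP[/eqP hA /eqP tA] /andP[/eqP hB /eqP tB]; apply/andP; split.
  by rewrite adjmxD adjmxZr -hA -hB.
by rewrite mxtraceD mxtraceZ tA tB mulr0 addr0.
Qed.

Lemma inX_scale (a : R) (A : M) : inX A -> inX (a%:C *: A).
Proof. by move=> h; rewrite -[_ *: A]addr0; apply: inX_lin h inX0. Qed.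

Lemma inX_add (A B : M) : inX A -> inX B -> inX (A + B).
Proof. by move=> hA hB; have := inX_lin 1 hA hB; rewrite scale1r. Qed.

Lemma inX_sum (I : Type) (r : seq I) (F : I -> M) : (forall i, inX (F i)) -> inX (\sum_(i <- r) F i).
Proof. move=> h; elim: r => [|j r IH]; by rewrite ?big_nil ?big_cons ?inX0 ?inX_add. Qed.

Lemma inX_H x y : x != y -> inX (Hm x y).
Proof.
move=> hxy; apply/andP; split.
  by rewrite /Hm adjmxD !adjmx_delta addrC.
by rewrite /Hm mxtraceD !tr_delta [y == x]eq_sym (negbTE hxy) addr0.
Qed.

Lemma inX_K x y : inX (Km x y).
Proof.
apply/andP; split.
  by rewrite /Km adjmxZ adjmxD adjmxN !adjmx_delta conj_i scaleNr -scalerN opprB.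
by rewrite /Km mxtraceZ mxtraceD linearN /= !tr_delta [y == x]eq_sym subrr mulr0.
Qed.

Lemma adjmx_scal (a : R) : adjmx (a%:C *: 1%:M : M) = a%:C *: 1%:M.
Proof.
apply/matrixP=> i j; rewrite /adjmx !mxE conjRM eq_sym.
by case: (i == j); rewrite ?mulr1n ?mulr0n ?rmorph1 ?rmorph0.
Qed.

Lemma inX_Hp x y : inX (Hp x y).
Proof.
have dpos : (0 < d)%N by apply: leq_ltn_trans (leq0n _) (ltn_ord x).
apply/andP; split.
  rewrite /Hp adjmxD adjmxN adjmx_scal /Hm adjmxD !adjmx_delta; apply/eqP.
  rewrite addrC [delta_mx y x + _]addrC; exact: addrC.
rewrite /Hp mxtraceD linearN /= mxtraceZ mxtrace1 /Hm mxtraceD !tr_delta [y == x]eq_sym.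
case: (boolP (x == y)) => hne /=; rewrite ?mulr0n ?mulr1n; last first.
  by rewrite addr0 !mul0r subrr.
have dR : (d%:R : C) = (d%:R : R)%:C by rewrite rmorph_nat.
rewrite mul1r dR -rmorphM mulfVK; last by rewrite pnatr_eq0 -lt0n.
by rewrite rmorph_nat subr_eq0.
Qed.

End Mats.

Section Generic.
Variables (T : comNzRingType) (d : nat).

Lemma sum_pickT (F : 'I_d -> T) y : (forall k, k != y -> F k = 0) -> \sum_k F k = F y.
Proof. by move=> h; rewrite (bigD1 y) //= big1 ?addr0. Qed.

Lemma sum2T (F : 'I_d -> T) x y : x != y -> (forall k, k != x -> k != y -> F k = 0) ->
  \sum_k F k = F x + F y.
Proof.
move=> hxy h; rewrite (bigD1 x) //= (bigD1 y) 1?eq_sym //= big1 ?addr0 // => k /andP[hx hy].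
exact: h.
Qed.

Lemma mul3_deltaT (U V : 'M[T]_d) x y a b : (U *m delta_mx x y *m V) a b = U a x * V y b.
Proof.
rewrite mxE (sum_pickT (y := y)).
  rewrite mxE (sum_pickT (y := x)); first by rewrite mxE !eqxx mulr1.
  by move=> l hl; rewrite mxE (negbTE hl) mulr0.
move=> k hk; rewrite mxE big1 ?mul0r // => l _; by rewrite mxE (negbTE hk) andbF mulr0.
Qed.

End Generic.

Section Rot.
Variables (R : realType) (d : nat) (x y : 'I_d).
Hypothesis hxy : x != y.

Definition rr (a b : 'I_d) : R :=
  if a == x then (if b == x then 3/5 else if b == y then -(4/5) else 0)
  else if a == y then (if b == x then 4/5 else if b == y then 3/5 else 0)
  else (a == b)%:R.

Definition Rr : 'M[R]_d := \matrix_(a, b) rr a b.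

Lemma rr_out a b : b != x -> b != y -> rr a b = (a == b)%:R.
Proof.
move=> hbx hby; rewrite /rr (negbTE hbx) (negbTE hby).
case: (eqVneq a x) => [->|hax]; first by rewrite eq_sym (negbTE hbx).
case: (eqVneq a y) => [->|hay]; first by rewrite eq_sym (negbTE hby).
by [].
Qed.

Lemma Rr_orth : Rr *m Rr^T = 1%:M.
Proof.
have hyx : y != x by rewrite eq_sym.
apply/matrixP=> a b; rewrite !mxE.
case: (boolP ((a == x) || (a == y))) => ha.
  rewrite (@sum2T _ d _ x y hxy); last first.
    move=> k hkx hky; rewrite !mxE /rr (negbTE hkx) (negbTE hky).
    by case/orP: ha => /eqP ->; rewrite ?eqxx ?(negbTE hyx) ?(negbTE hxy) /= ?mul0r.
  rewrite !mxE.
  case: (eqVneq b x) => [->|hbx]; [|case: (eqVneq b y) => [->|hby]];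
  case/orP: ha => /eqP ->; rewrite /rr ?eqxx ?(negbTE hyx) ?(negbTE hxy) /=;
  rewrite ?(negbTE hbx) ?(negbTE hby) ?[x == b]eq_sym ?[y == b]eq_sym ?(negbTE hbx) ?(negbTE hby) /=;
  rewrite ?mulr1n ?mulr0n; lra.
move: ha; rewrite negb_or => /andP[hax hay].
rewrite (sum_pickT (y := a)); last first.
  by move=> k hk; rewrite !mxE /rr (negbTE hax) (negbTE hay) [a == k]eq_sym (negbTE hk) mul0r.
rewrite !mxE (rr_out a hax hay) eqxx mul1r.
case: (eqVneq b x) => [->|hbx]; [|case: (eqVneq b y) => [->|hby]].
- by rewrite /rr eqxx (negbTE hax) (negbTE hay).
- by rewrite /rr eqxx (negbTE hyx) (negbTE hax) (negbTE hay).
by rewrite rr_out // eq_sym.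
Qed.

Definition Hr : 'M[R]_d := delta_mx x y + delta_mx y x.
Definition Ddr : 'M[R]_d := delta_mx x x - delta_mx y y.

Lemma Rr_Hd : Ddr = (-7/24) *: Hr + (-25/24) *: (Rr *m Hr *m Rr^T).
Proof.
have hyx : y != x by rewrite eq_sym.
apply/matrixP=> a b.
have e : (Rr *m Hr *m Rr^T) a b = rr a x * rr b y + rr a y * rr b x.
  by rewrite /Hr mulmxDr mulmxDl mxE !mul3_deltaT !mxE.
rewrite [X in _ = X]mxE [X in _ = _ + X]mxE e !mxE.
case: (eqVneq a x) => [->|hax]; [|case: (eqVneq a y) => [->|hay]];
case: (eqVneq b x) => [->|hbx]; try (case: (eqVneq b y) => [->|hby]);
rewrite /rr ?eqxx ?(negbTE hyx) ?(negbTE hxy) /=;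
rewrite ?(negbTE hax) ?(negbTE hay) ?(negbTE hbx) ?(negbTE hby) /=;
rewrite ?[x == a]eq_sym ?[y == a]eq_sym ?[x == b]eq_sym ?[y == b]eq_sym;
rewrite ?(negbTE hax) ?(negbTE hay) ?(negbTE hbx) ?(negbTE hby) /= ?mulr1n ?mulr0n; lra.
Qed.

End Rot.

Section Twirl.
Variables (R : realType) (d : nat).
Local Notation C := (R[i]).
Local Notation M := ('M[R[i]]_d).

Lemma conjc0' : conjc (0 : C) = 0.
Proof. by apply/eqP; rewrite eq_complex /= oppr0 !eqxx. Qed.

Definition dg (v : 'I_d -> C) : M := diag_mx (\row_a v a).

Lemma adj_dg v : adjmx (dg v) = dg (fun a => conjc (v a)).
Proof.
apply/matrixP=> a b; rewrite /adjmx /dg !mxE.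
case: (eqVneq a b) => [->|hab]; first by rewrite ?eqxx !mulr1n.
by rewrite !mulr0n conjc0'.
Qed.

Lemma dg_ad v (B : M) a b : (dg v *m B *m adjmx (dg v)) a b = v a * B a b * conjc (v b).
Proof. by rewrite adj_dg /dg mul_mx_diag mul_diag_mx !mxE. Qed.

Lemma dg_unitary v : (forall a, v a * conjc (v a) = 1) -> unitary (dg v).
Proof.
move=> hv; apply/eqP/matrixP=> a b; rewrite adj_dg /dg mul_diag_mx !mxE.
case: (eqVneq a b) => [->|hab]; first by rewrite ?eqxx !mulr1n hv.
by rewrite ?(negbTE hab) !mulr0n mulr0.
Qed.

Definition sg (j a : 'I_d) : R := if a == j then -1 else 1.

Lemma sg2 j a : sg j a * sg j a = 1.
Proof. by rewrite /sg; case: (a == j); rewrite ?mulrNN mulr1. Qed.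

Definition Dm j : M := dg (fun a => (sg j a)%:C).

Lemma Dm_unitary j : unitary (Dm j).
Proof. by apply: dg_unitary => a; rewrite conjR -rmorphM sg2. Qed.

Lemma Dm_ad j (B : M) a b : (Dm j *m B *m adjmx (Dm j)) a b = (sg j a * sg j b)%:C * B a b.
Proof. by rewrite dg_ad conjR rmorphM; ring. Qed.

Lemma perm_ad (s : {perm 'I_d}) (B : M) a b :
  (perm_mx s *m B *m adjmx (perm_mx s)) a b = B (s a) (s b).
Proof. by rewrite /adjmx map_perm_mx tr_perm_mx -col_permE -row_permE !mxE. Qed.

Lemma perm_unitary (s : {perm 'I_d}) : unitary (perm_mx s : M).
Proof. by rewrite /unitary /adjmx map_perm_mx tr_perm_mx -perm_mxM mulgV perm_mx1. Qed.

Variables (i0 i1 : 'I_d).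
Hypothesis h01 : i0 != i1.

Definition eps (j : 'I_d) : R := if (j == i0) || (j == i1) then -1 else 1.
Definition fac j a b : R := (1 + eps j * (sg j a * sg j b)) / 2.

Definition Tw (l : seq 'I_d) (A : M) : M := \matrix_(a, b) ((\prod_(j <- l) fac j a b)%:C * A a b).

Lemma Tw_key (u v w P : R) (z : C) :
  u%:C * (P%:C * z) + v%:C * (w%:C * (P%:C * z)) = ((u + v * w) * P)%:C * z.
Proof. by rewrite !rmorphM rmorphD rmorphM; ring. Qed.

Lemma Tw_inSc l : inSc (Tw l) (\prod_(j <- l) ((1 + eps j) / 2)).
Proof.
elim: l => [|j l IH].
  rewrite big_nil; apply: inSc_ext (inSc_id R d) => A _.
  by apply/matrixP => a b; rewrite !mxE big_nil mul1r.
have h := inSc_add (inSc_scale (1/2) IH) (inSc_scale (eps j / 2) (inSc_adl (Dm_unitary j) IH)).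
rewrite big_cons (_ : (1 + eps j) / 2 * _ = 1 / 2 * (\prod_(j <- l) ((1 + eps j) / 2)) + eps j / 2 * (\prod_(j <- l) ((1 + eps j) / 2))); last by ring.
apply: inSc_ext h => A _; apply/matrixP => a b.
rewrite mxE [in RHS]mxE [(_ *: (Dm j *m _ *m _)) a b]mxE Dm_ad !mxE big_cons.
rewrite Tw_key; congr (_%:C * _); rewrite /fac; ring.
Qed.

Lemma prod_eps0 : \prod_(j <- enum 'I_d) ((1 + eps j) / 2) = 0.
Proof.
rewrite (big_rem i0) ?mem_enum // /eps eqxx /=.
by rewrite subrr mul0r mul0r.
Qed.

Lemma prod_fac0 a b j : fac j a b = 0 -> \prod_(k <- enum 'I_d) fac k a b = 0.
Proof. by move=> h; rewrite (big_rem j) ?mem_enum //= h mul0r. Qed.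

Lemma fac_one j a b : ((a == i0) && (b == i1)) || ((a == i1) && (b == i0)) -> fac j a b = 1.
Proof.
move=> hab; have h10 : i1 != i0 by rewrite eq_sym.
have key : eps j * (sg j a * sg j b) = 1.
  rewrite /eps /sg.
  case/orP: hab => /andP[/eqP -> /eqP ->].
    case: (eqVneq j i0) => [hj|hj0]; first by rewrite ?hj ?eqxx /= ?eqxx ?[i1 == i0]eq_sym ?(negbTE h01) ?(negbTE h10); ring.
    case: (eqVneq j i1) => [hj|hj1]; first by rewrite ?hj ?eqxx ?orbT ?eqxx ?(negbTE h01) ?(negbTE h10); ring.
    by rewrite ?(negbTE hj0) ?(negbTE hj1) ?[i0 == j]eq_sym ?[i1 == j]eq_sym ?(negbTE hj0) ?(negbTE hj1) /=; ring.
  case: (eqVneq j i0) => [hj|hj0]; first by rewrite ?hj ?eqxx /= ?eqxx ?(negbTE h01) ?(negbTE h10); ring.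
  case: (eqVneq j i1) => [hj|hj1]; first by rewrite ?hj ?eqxx ?orbT ?eqxx ?(negbTE h01) ?(negbTE h10); ring.
  by rewrite ?(negbTE hj0) ?(negbTE hj1) ?[i0 == j]eq_sym ?[i1 == j]eq_sym ?(negbTE hj0) ?(negbTE hj1) /=; ring.
by rewrite /fac key; field.
Qed.

Lemma prod_fac a b :
  \prod_(k <- enum 'I_d) fac k a b =
  if ((a == i0) && (b == i1)) || ((a == i1) && (b == i0)) then 1 else 0.
Proof.
have h10 : i1 != i0 by rewrite eq_sym.
case: ifP => hab.
  by rewrite big1_seq // => j _; apply: fac_one.
case: (eqVneq a b) => [hab'|hab'].
  apply: (prod_fac0 (j := i0)); rewrite /fac hab' sg2 /eps eqxx /=; by field.
case: (boolP ((a == i0) || (a == i1))) => ha.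
  case: (boolP ((b == i0) || (b == i1))) => hb.
    move: hab; case/orP: ha => /eqP ha; case/orP: hb => /eqP hb; subst a b;
    by rewrite ?eqxx ?(negbTE h01) ?(negbTE h10) //; move: hab'; rewrite eqxx.
  apply: (prod_fac0 (j := b)); rewrite /fac /eps (negbTE hb) /sg eqxx.
  by rewrite (negbTE hab') /=; field.
apply: (prod_fac0 (j := a)); rewrite /fac /eps (negbTE ha) /sg eqxx.
by rewrite [b == a]eq_sym (negbTE hab') /=; field.
Qed.

Definition Pt : M := perm_mx (tperm i0 i1).
Definition Fm (A : M) : M := Tw (enum 'I_d) A + Pt *m Tw (enum 'I_d) A *m adjmx Pt.

Lemma Fm_inSc : inSc Fm 0.
Proof.
have h := inSc_add (Tw_inSc (enum 'I_d)) (inSc_adl (perm_unitary (tperm i0 i1)) (Tw_inSc (enum 'I_d))).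
by rewrite prod_eps0 addr0 in h.
Qed.

Lemma c1 : (1 : R)%:C = 1 :> C. Proof. by []. Qed.
Lemma c0 : (0 : R)%:C = 0 :> C. Proof. by []. Qed.

Lemma Fm_val (A : M) : Fm A = (A i0 i1 + A i1 i0) *: Hm R i0 i1.
Proof.
have h10 : i1 != i0 by rewrite eq_sym.
apply/matrixP => a b; rewrite /Fm /Pt mxE perm_ad !mxE !prod_fac.
case: (tpermP i0 i1 a) => [->|->|/eqP/negbTE ha0 /eqP/negbTE ha1];
case: (tpermP i0 i1 b) => [->|->|/eqP/negbTE hb0 /eqP/negbTE hb1];
rewrite ?eqxx ?(negbTE h01) ?(negbTE h10) /=; try rewrite ha0 ha1 /=; try rewrite hb0 hb1 /=;
rewrite ?eqxx ?(negbTE h01) ?(negbTE h10) /= ?c1 ?c0 ?mulr1n ?mulr0n; ring.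
Qed.

End Twirl.

Lemma sum_pickV (V : zmodType) (d : nat) (F : 'I_d -> V) y :
  (forall k, k != y -> F k = 0) -> \sum_k F k = F y.
Proof. by move=> h; rewrite (bigD1 y) //= big1 ?addr0. Qed.

Section Decomp.
Variables (R : realType) (d : nat).
Local Notation C := (R[i]).
Local Notation M := ('M[R[i]]_d).
Local Notation iC := (@Complex R 0 1).

Lemma herm_entry (A : M) x y : inX A -> A y x = conjc (A x y).
Proof. by move=> /andP[/eqP h _]; rewrite {1}h /adjmx !mxE. Qed.

Lemma ReJ (z : C) : (@complex.Re R (conjc z + z))%:C = conjc z + z.
Proof. by case: z => u w; apply/eqP; rewrite eq_complex /= addNr !eqxx. Qed.

Lemma ReK (z : C) : (@complex.Re R (iC * (conjc z - z)))%:C = iC * (conjc z - z).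
Proof. by case: z => u w; apply/eqP; rewrite eq_complex /=; apply/andP; split; apply/eqP; ring. Qed.

Lemma iC2' : iC * iC = -1.
Proof. by apply/eqP; rewrite eq_complex /= mul0r mul1r sub0r mul1r mul0r addr0 oppr0 !eqxx. Qed.

Lemma iK (t : C) : iC * t * iC = - t.
Proof. by rewrite mulrAC iC2' mulN1r. Qed.

Lemma trHp (A : M) x y : \tr A = 0 -> \tr (Hp R x y *m A) = \tr (Hm R x y *m A).
Proof. by move=> tA; rewrite /Hp mulmxBl linearB /= -scalemxAl mul1mx mxtraceZ tA mulr0 subr0. Qed.

Lemma Decomp (A : M) : inX A ->
  A = \sum_x \sum_y ((@complex.Re R (\tr (Hp R x y *m A)) / 4)%:C *: Hp R x y
                     + (@complex.Re R (\tr (Km R x y *m A)) / 4)%:C *: Km R x y).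
Proof.
move=> hA; have tA : \tr A = 0 by case/andP: hA => _ /eqP.
pose q : C := (4^-1 : R)%:C.
have e4 : forall r : R, (r / 4)%:C = r%:C * q by move=> r; rewrite rmorphM.
have term : forall x y,
   (@complex.Re R (\tr (Hp R x y *m A)) / 4)%:C *: Hp R x y + (@complex.Re R (\tr (Km R x y *m A)) / 4)%:C *: Km R x y
   = (2%:R * q) *: (A x y *: delta_mx x y) + (2%:R * q) *: (A y x *: delta_mx y x)
     - ((A y x + A x y) * q * ((x == y)%:R * 2 / d%:R)%:C) *: 1%:M.
  move=> x y.
  have r1 : (@complex.Re R (A y x + A x y))%:C = A y x + A x y by rewrite (herm_entry x y hA) ReJ.
  have r2 : (@complex.Re R (iC * (A y x - A x y)))%:C = iC * (A y x - A x y)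
    by rewrite (herm_entry x y hA) ReK.
  rewrite trHp // trH trK !e4 r1 r2 /Km scalerA -(mulrA iC) iK /Hp /Hm.
  by apply/matrixP => a b; rewrite !mxE; ring.
rewrite (eq_bigr _ (fun x _ => eq_bigr _ (fun y _ => term x y))).
under eq_bigr => x _ do rewrite sumrB big_split /=.
rewrite sumrB big_split /=.
under eq_bigr => x _ do rewrite -scaler_sumr.
under [X in _ + X - _]eq_bigr => x _ do rewrite -scaler_sumr.
rewrite -!scaler_sumr -matrix_sum_delta exchange_big /= -matrix_sum_delta.
have hc : \sum_x \sum_y (((A y x + A x y) * q * ((x == y)%:R * 2 / d%:R)%:C) *: (1%:M : M)) = 0.
  rewrite (eq_bigr (fun x => ((A x x + A x x) * q * ((x == x)%:R * 2 / d%:R)%:C) *: (1%:M : M))); last first.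
    move=> x _; rewrite (sum_pickV (y := x)) // => y hy.
    by rewrite eq_sym (negbTE hy) !mul0r (_ : (0 : R)%:C = 0) // mulr0 scale0r.
  rewrite -scaler_suml (eq_bigr (fun x => A x x * (2%:R * q * (2 / d%:R)%:C))); last first.
    by move=> x _; rewrite eqxx /= mul1r; ring.
  rewrite -mulr_suml.
  have -> : \sum_(i < d) A i i = 0 by exact: tA.
  by rewrite mul0r scale0r.
rewrite hc subr0 -scalerDl (_ : 2%:R * q + 2%:R * q = 1) ?scale1r //.
rewrite -mulrDl -natrD /q (_ : ((2 + 2)%N%:R : C) = (4%:R : R)%:C); last by rewrite rmorph_nat.
by rewrite -rmorphM mulfV // pnatr_eq0.
Qed.

End Decomp.

Section Gen.
Variables (R : realType) (d : nat) (i0 i1 : 'I_d).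
Hypothesis h01 : i0 != i1.
Local Notation C := (R[i]).
Local Notation M := ('M[R[i]]_d).
Local Notation iC := (@Complex R 0 1).
Local Notation rc := (real_complex R).

Lemma cN1 : (-1 : R)%:C = -1 :> C.
Proof. by apply/eqP; rewrite eq_complex /= oppr0 !eqxx. Qed.
Lemma c1' : (1 : R)%:C = 1 :> C. Proof. by []. Qed.
Lemma conjc1' : conjc (1 : C) = 1.
Proof. by apply/eqP; rewrite eq_complex /= oppr0 !eqxx. Qed.
Lemma iC2 : iC * iC = -1.
Proof. by apply/eqP; rewrite eq_complex /= mul0r mul1r sub0r mul1r mul0r addr0 oppr0 !eqxx. Qed.

Lemma adjmx_real (Q : 'M[R]_d) : adjmx (map_mx rc Q) = map_mx rc Q^T.
Proof. by apply/matrixP=> a b; rewrite /adjmx !mxE conjR. Qed.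

Lemma unitary_real (Q : 'M[R]_d) : Q *m Q^T = 1%:M -> unitary (map_mx rc Q).
Proof. by move=> h; rewrite /unitary adjmx_real -map_mxM h map_mx1. Qed.

Lemma ad_real (Q B : 'M[R]_d) :
  map_mx rc Q *m map_mx rc B *m adjmx (map_mx rc Q) = map_mx rc (Q *m B *m Q^T).
Proof. by rewrite adjmx_real !map_mxM. Qed.

Lemma map_Hr (x y : 'I_d) : map_mx rc (Hr R x y) = Hm R x y.
Proof. by apply/matrixP=> a b; rewrite !mxE rmorphD !rmorph_nat. Qed.

Lemma map_Ddr (x y : 'I_d) : map_mx rc (Ddr R x y) = Dd R x y.
Proof. by apply/matrixP=> a b; rewrite !mxE rmorphB !rmorph_nat. Qed.

Lemma eq_sym' (T : eqType) (u v : T) : u != v -> v != u.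
Proof. by rewrite eq_sym. Qed.

Lemma tperm_eq (u v a z : 'I_d) : (tperm u v a == z) = (a == tperm u v z).
Proof. by apply/eqP/eqP => h; [rewrite -h tpermK | rewrite h tpermK]. Qed.

Variable P : M -> Prop.
Hypothesis Plin : forall (a : R) B1 B2, P B1 -> P B2 -> P (a%:C *: B1 + B2).
Hypothesis Pad : forall W B, unitary W -> P B -> P (W *m B *m adjmx W).
Hypothesis Pbase : P (Hm R i0 i1).

Lemma P0 : P 0.
Proof. by have := Plin (-1) Pbase Pbase; rewrite cN1 scaleN1r addNr. Qed.

Lemma Pscale a B : P B -> P (a%:C *: B).
Proof. by move=> h; have := Plin a h P0; rewrite addr0. Qed.

Lemma Padd B1 B2 : P B1 -> P B2 -> P (B1 + B2).
Proof. by move=> h1 h2; have := Plin 1 h1 h2; rewrite c1' scale1r. Qed.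

Lemma Psum (I : Type) (r : seq I) (F : I -> M) : (forall i, P (F i)) -> P (\sum_(i <- r) F i).
Proof. move=> h; elim: r => [|j r IH]; [rewrite big_nil; exact: P0 | rewrite big_cons; exact: Padd (h j) IH]. Qed.

Lemma PH_t u v x y : P (Hm R x y) -> P (Hm R (tperm u v x) (tperm u v y)).
Proof.
move=> h; have := Pad (@perm_unitary R d (tperm u v)) h.
congr P; apply/matrixP=> a b; rewrite perm_ad !mxE !tperm_eq //.
Qed.

Lemma PH x y : x != y -> P (Hm R x y).
Proof.
have h10 : i1 != i0 by rewrite eq_sym.
have step1 : forall y', y' != i0 -> P (Hm R i0 y').
  move=> y' hy; have := PH_t i1 y' Pbase.
  by rewrite tpermL (tpermD h10 hy).
case: (eqVneq x i0) => [->|hx0] hxy.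
  by apply: step1; rewrite eq_sym.
have := step1 _ hx0; rewrite HmC => h.
have := PH_t i0 y h.
by rewrite tpermL (tpermD (eq_sym' hx0) (eq_sym' hxy)).
Qed.

Lemma cmi : Complex (0 : R) (-1) = - iC.
Proof. by apply/eqP; rewrite eq_complex /= oppr0 !eqxx. Qed.
Lemma cone : Complex (1 : R) (-0) = 1.
Proof. by rewrite oppr0. Qed.

Lemma PK x y : P (Km R x y).
Proof.
case: (eqVneq x y) => [->|hxy].
  by rewrite /Km subrr scaler0; exact: P0.
have hyx : y != x by rewrite eq_sym.
pose v := fun a : 'I_d => if a == x then iC else 1.
have uv : unitary (dg v).
  apply: dg_unitary => a; rewrite /v; case: (a == x).
    by rewrite conj_i mulrN iC2 opprK.
  by rewrite conjc1' mulr1.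
have := Pad uv (PH hxy); congr P; apply/matrixP => a b.
case: (eqVneq a x) => [->|hax]; [|case: (eqVneq a y) => [->|hay]];
case: (eqVneq b x) => [->|hbx]; try (case: (eqVneq b y) => [->|hby]);
rewrite dg_ad /Km !mxE /v;
rewrite ?eqxx ?(negbTE hyx) ?(negbTE hxy) /=;
rewrite ?(negbTE hax) ?(negbTE hay) ?(negbTE hbx) ?(negbTE hby) /=;
rewrite ?cmi ?cone ?mulr1n ?mulr0n; ring.
Qed.

Lemma PD x y : x != y -> P (Dd R x y).
Proof.
move=> hxy.
have hR := Pad (unitary_real (@Rr_orth R d x y hxy)) (PH hxy).
have h2 := Plin (-7/24) (PH hxy) (Pscale (-25/24) hR).
by rewrite -map_Ddr (@Rr_Hd R d x y hxy) map_mxD !map_mxZ -ad_real map_Hr.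
Qed.

Lemma PHp x y : P (Hp R x y).
Proof.
case: (eqVneq x y) => [<-|hxy]; last first.
  rewrite /Hp (negbTE hxy) mul0r mul0r (_ : (0 : R)%:C = 0) // scale0r subr0.
  exact: PH.
have dpos : (0 < d)%N by apply: leq_ltn_trans (leq0n _) (ltn_ord x).
have dn0 : (d%:R : R) != 0 by rewrite pnatr_eq0 -lt0n.
have -> : Hp R x x = \sum_z ((2 / d%:R : R)%:C *: Dd R x z).
  rewrite -scaler_sumr sumrB sumr_const card_ord -mx1_sum_delta scalerBr.
  rewrite -scalerMnr scalerMnl -rmorphMn -mulr_natr divfK // rmorph_nat scaler_nat mulr2n /Hp /Hm eqxx /=.
  by rewrite mul1r.
apply: Psum => z; apply: Pscale.
case: (eqVneq x z) => [<-|hxz]; last exact: PD.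
by rewrite /Dd subrr; exact: P0.
Qed.

Lemma Pall B : inX B -> P B.
Proof.
move=> hB; rewrite (Decomp hB); apply: Psum => x; apply: Psum => y.
by apply: Padd; apply: Pscale; [exact: PHp | exact: PK].
Qed.

End Gen.


Section Final.
Variables (R : realType) (d : nat).
Local Notation C := (R[i]).
Local Notation M := ('M[R[i]]_d).

Definition Rk (Cm B A : M) : M := (@complex.Re R (\tr (Cm *m A)))%:C *: B.

Lemma ReL (a : R) (z w : C) : complex.Re (a%:C * z + w) = a * complex.Re z + complex.Re w.
Proof. by case: z => z1 z2; case: w => w1 w2 /=; ring. Qed.

Lemma Rk_base (i0 i1 : 'I_d) : i0 != i1 -> inSc (Rk (Hm R i0 i1) (Hm R i0 i1)) 0.
Proof.
move=> h01; apply: inSc_ext (Fm_inSc R i0 i1) => A hA.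
rewrite Fm_val // /Rk trH (herm_entry i0 i1 hA) ReJ.
by congr (_ *: _); rewrite addrC.
Qed.

Lemma rank_one (i0 i1 : 'I_d) (Cm B : M) : i0 != i1 -> inX Cm -> inX B -> inSc (Rk Cm B) 0.
Proof.
move=> h01 hC hB.
have step1 : forall B', inX B' -> inSc (Rk (Hm R i0 i1) B') 0.
  apply: (Pall h01 (P := fun B' => inSc (Rk (Hm R i0 i1) B') 0)).
  - move=> a B1 B2 h1 h2; have h := inSc_add (inSc_scale a h1) h2.
    rewrite mulr0 addr0 in h; apply: inSc_ext h => A _.
    by rewrite /Rk scalerDr !scalerA mulrC.
  - move=> W B' uW h; have h' := inSc_adl uW h; apply: inSc_ext h' => A _.
    by rewrite /Rk -scalemxAr -scalemxAl.
  - exact: Rk_base.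
apply: (Pall h01 (P := fun C' => inSc (Rk C' B) 0)) => //.
- move=> a C1 C2 h1 h2; have h := inSc_add (inSc_scale a h1) h2.
  rewrite mulr0 addr0 in h; apply: inSc_ext h => A _.
  rewrite /Rk mulmxDl -scalemxAl mxtraceD mxtraceZ ReL rmorphD rmorphM.
  by rewrite scalerDl scalerA.
- move=> W C' uW h; have h' := inSc_adr uW h; apply: inSc_ext h' => A _.
  by rewrite /Rk !mulmxA mxtrace_mulC !mulmxA.
- exact: step1.
Qed.

Lemma inSc_sum (I : Type) (r : seq I) (G : I -> M -> M) :
  (forall i, inSc (G i) 0) -> inSc (fun A => \sum_(i <- r) G i A) 0.
Proof.
move=> h; elim: r => [|j r IH].
  exists [::]; split => //; split; first by rewrite big_nil.
  by move=> A _; rewrite /Lmap !big_nil.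
have h' := inSc_add (h j) IH; rewrite addr0 in h'.
by apply: inSc_ext h' => A _; rewrite big_cons.
Qed.

Lemma inX_Lmap (s : seq (R * M)) (A : M) : all (fun p => unitary p.2) s -> inX A -> inX (Lmap s A).
Proof.
move=> us hA; elim: s us => [|p s IH] /=; first by rewrite /Lmap big_nil inX0.
move=> /andP[up us]; rewrite /Lmap big_cons; apply: inX_lin; first exact: inX_ad.
exact: IH.
Qed.

Lemma Lmap_lin (s : seq (R * M)) (a : R) (A B : M) :
  Lmap s (a%:C *: A + B) = a%:C *: Lmap s A + Lmap s B.
Proof.
rewrite /Lmap scaler_sumr -big_split; apply: eq_bigr => p _ /=.
by rewrite mulmxDr mulmxDl -scalemxAr -scalemxAl scalerDr !scalerA mulrC.
Qed.

Section Lin.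
Variable f : M -> M.
Hypothesis hl : real_linear_on_X f.

Lemma fl0 : f 0 = 0.
Proof.
have := hl.2 1 0 0 (inX0 R d) (inX0 R d); rewrite scaler0 addr0 c1' scale1r.
by rewrite -{1}[f 0]addr0 => /addrI <-.
Qed.

Lemma flZ (a : R) A : inX A -> f (a%:C *: A) = a%:C *: f A.
Proof. by move=> hA; have := hl.2 a A 0 hA (inX0 R d); rewrite !addr0 fl0 addr0. Qed.

Lemma flD A B : inX A -> inX B -> f (A + B) = f A + f B.
Proof. by move=> hA hB; have := hl.2 1 A B hA hB; rewrite c1' !scale1r. Qed.

Lemma fl_sum (I : Type) (r : seq I) (F : I -> M) :
  (forall i, inX (F i)) -> f (\sum_(i <- r) F i) = \sum_(i <- r) f (F i).
Proof.
move=> h; elim: r => [|j r IH]; first by rewrite !big_nil fl0.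
by rewrite !big_cons flD ?IH //; apply: inX_sum.
Qed.

End Lin.

End Final.

Lemma small_X (R : realType) (d : nat) (A : 'M[R[i]]_d) : (d <= 1)%N -> inX A -> A = 0.
Proof.
case: d A => [|[|n]] A // _ hA.
  by apply/matrixP => [[m hm]].
case/andP: hA => _ /eqP tA; apply/matrixP => a b; rewrite (ord1 a) (ord1 b) mxE.
by move: tA; rewrite /mxtrace big_ord1.
Qed.

Theorem proposition1 (R : realType) (d : nat) (f : 'M[R[i]]_d -> 'M[R[i]]_d) :
  in_zerospan_V f <-> real_linear_on_X f.
Proof.
split.
- move=> [s [us [ss hs]]]; split.
    by move=> A hA; rewrite hs //; apply: inX_Lmap.
  move=> a A B hA hB; rewrite !hs //; last exact: inX_lin.
  exact: Lmap_lin.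
move=> hl.
case: (leqP d 1) => hd.
  exists [::]; split => //; split; first by rewrite big_nil.
  by move=> A hA; rewrite (small_X hd hA) /Lmap big_nil; exact: fl0.
pose i0 : 'I_d := Ordinal (ltn_trans (ltnSn 0) hd).
pose i1 : 'I_d := Ordinal hd.
have h01 : i0 != i1 by [].
pose q : R[i] := (4^-1 : R)%:C.
pose g := fun A => \sum_x \sum_y (Rk (Hp R x y) (q *: f (Hp R x y)) A + Rk (Km R x y) (q *: f (Km R x y)) A).
have hg : inSc g 0.
  apply: inSc_sum => x; apply: inSc_sum => y.
  have h := inSc_add (rank_one h01 (inX_Hp R x y) (inX_scale (4^-1) (hl.1 _ (inX_Hp R x y))))
                     (rank_one h01 (inX_K R x y) (inX_scale (4^-1) (hl.1 _ (inX_K R x y)))).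
  by rewrite addr0 in h.
apply: inSc_ext hg => A hA.
rewrite {2}(Decomp hA) (fl_sum hl); last first.
  move=> x; apply: inX_sum => y; apply: inX_add; apply: inX_scale; [exact: inX_Hp | exact: inX_K].
apply: eq_bigr => x _; rewrite (fl_sum hl); last first.
  move=> y; apply: inX_add; apply: inX_scale; [exact: inX_Hp | exact: inX_K].
apply: eq_bigr => y _.
have h1 := inX_Hp R x y; have h2 := inX_K R x y.
rewrite (flD hl (inX_scale _ h1) (inX_scale _ h2)) (flZ hl _ h1) (flZ hl _ h2).
by rewrite /Rk !scalerA -!rmorphM.
Qed.
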